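(* There are constants $c,C>0$ such that for all $n\ge2$ and all $j\le n$, $c\,n\le\mu(D_n,z_j,e_j)\le C\,n$, i.e. $\mu(D_n,z_j,e_j)=\Theta(n)$.
   Context: For $n\ge2$ let $k=\lceil\sqrt n\rceil-1$ and $S_k=\{(-1+\frac{2p}{k})+i(-1+\frac{2q}{k}):0\le p,q\le k\}\subset\mathbb{C}$. $D_n$ is the diagonal matrix whose diagonal entries $z_1,\dots,z_n$ are the first $n$ elements of $S_k$ in lexicographic order; $e_j$ are the standard basis vectors. For $v\ne0$, $T_v=v^\perp\subset\mathbb{C}^n$, $P_{v^\perp}$ the orthogonal projection onto $T_v$, $A_{\lambda,v}=P_{v^\perp}(A-\lambda\mathrm{Id})|_{T_v}$, and $\mu(A,\lambda,v)=\|A\|_F\|A_{\lambda,v}^{-1}\|$ (Frobenius norm times operator norm; $\infty$ if not invertible). *)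

(* Defs.v *)
From HB Require Import structures.
From mathcomp Require Import all_boot all_order all_algebra.
From mathcomp Require Import complex.
Local Open Scope complex_scope.
From mathcomp Require Import boolp classical_sets reals constructive_ereal ereal.
Set Implicit Arguments. Unset Strict Implicit. Unset Printing Implicit Defensive.
Import Order.TTheory GRing.Theory Num.Theory.
Local Open Scope ring_scope.
Local Open Scope classical_set_scope.

Section Defs.
Variable R : realType.
Local Notation C := (R[i]).

Definition csq (x : C) : R := let: a +i* b := x in a ^+ 2 + b ^+ 2.

Definition hdot (n : nat) (u w : 'cV[C]_n) : C :=
  \sum_(i < n) conjc (u i 0) * w i 0.

Definition vnorm (n : nat) (u : 'cV[C]_n) : R := Num.sqrt (\sum_(i < n) csq (u i 0)).

Definition frob (n : nat) (A : 'M[C]_n) : R :=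
  Num.sqrt (\sum_(i < n) \sum_(j < n) csq (A i j)).

Definition Tperp (n : nat) (v : 'cV[C]_n) : set 'cV[C]_n := [set u | hdot v u = 0].

Definition projperp (n : nat) (v u : 'cV[C]_n) : 'cV[C]_n :=
  u - (hdot v u / hdot v v) *: v.

(* A_{lambda,v} = P_{v^perp} (A - lambda Id) restricted to T_v *)
Definition Alv (n : nat) (A : 'M[C]_n) (l : C) (v : 'cV[C]_n) (u : 'cV[C]_n) : 'cV[C]_n :=
  projperp v ((A - l%:M) *m u).

Definition Alv_invertible (n : nat) (A : 'M[C]_n) (l : C) (v : 'cV[C]_n) : Prop :=
  (forall u1 u2, Tperp v u1 -> Tperp v u2 -> Alv A l v u1 = Alv A l v u2 -> u1 = u2) /\
  (forall w, Tperp v w -> exists2 u, Tperp v u & Alv A l v u = w).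

(* operator norm of A_{lambda,v}^{-1}: sup over unit w in T_v of |A_{lambda,v}^{-1} w|,
   where A_{lambda,v}^{-1} w is the (unique) u in T_v with A_{lambda,v} u = w *)
Definition inv_opnorm (n : nat) (A : 'M[C]_n) (l : C) (v : 'cV[C]_n) : \bar R :=
  ereal_sup [set (vnorm u)%:E | u in
    [set u | Tperp v u /\ exists2 w, Tperp v w /\ vnorm w = 1 & Alv A l v u = w]].

Definition mu (n : nat) (A : 'M[C]_n) (l : C) (v : 'cV[C]_n) : \bar R :=
  if `[< Alv_invertible A l v >] then ((frob A)%:E * inv_opnorm A l v)%E else +oo%E.

Definition ceil_sqrt (n : nat) : nat := find (fun m => n <= m * m)%N (iota 0 n.+1).

Definition kk (n : nat) : nat := (ceil_sqrt n).-1.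

(* S_k listed in lexicographic order (real part, then imaginary part) *)
Definition Sk (k : nat) : seq C :=
  [seq (-1 + 2 * p%:R / k%:R) +i* (-1 + 2 * q%:R / k%:R) | p <- iota 0 k.+1, q <- iota 0 k.+1].

(* z_j: the j-th (0-based) element of S_k in lexicographic order, k = ceil(sqrt n) - 1 *)
Definition zz (n : nat) (j : 'I_n) : C := nth 0 (Sk (kk n)) j.

Definition Dn (n : nat) : 'M[C]_n := \matrix_(i < n, j < n) if i == j then zz i else 0.

Definition ee (n : nat) (j : 'I_n) : 'cV[C]_n := delta_mx j 0.

End Defs.

(* Main.v *)
Require Import Defs.
From HB Require Import structures.
From mathcomp Require Import all_boot all_order all_algebra.
From mathcomp Require Import complex.
From mathcomp Require Import boolp classical_sets reals constructive_ereal ereal.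
From mathcomp Require Import zify ring lra.
Import Order.TTheory GRing.Theory Num.Theory.
Local Open Scope ring_scope.
Local Open Scope complex_scope.
Lemma nth_allpairs (S T U : Type) (f : S -> T -> U) (s : seq S) (t : seq T) a b x0 i j :
  (i < size s)%N -> (j < size t)%N ->
  nth x0 [seq f x y | x <- s, y <- t] (i * size t + j) = f (nth a s i) (nth b t j).
Proof.
elim: s i => [|x s IH] i //= hi hj.
case: i hi => [|i] hi.
  by rewrite mul0n add0n nth_cat size_map hj (nth_map b).
rewrite nth_cat size_map.
rewrite ifF; last by apply/negbTE; rewrite -leqNgt mulSn -addnA leq_addr.
by rewrite mulSn -addnA addKn IH.
Qed.

Lemma ceil_sqrt_spec n : (2 <= n)%N ->
  (1 <= kk n)%N /\ (n <= (kk n).+1 * (kk n).+1)%N /\ (kk n * kk n < n)%N.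
Proof.
move=> n2; rewrite /kk /ceil_sqrt.
set P := (fun m => n <= m * m)%N.
have hasP : has P (iota 0 n.+1).
  apply/hasP; exists n; first by rewrite mem_iota; lia.
  by rewrite /P /=; nia.
have hlt := hasP; rewrite has_find size_iota in hlt.
have hP := nth_find 0 hasP; rewrite nth_iota // add0n in hP.
set m := find P _ in hlt hP *.
have bef : forall i, (i < m)%N -> ~~ P i.
  move=> i him; have := before_find 0 him; rewrite nth_iota ?add0n.
    by move=> ->.
  lia.
case: m bef hlt hP => [|m] bef _ hP; first by rewrite /P /= in hP; lia.
rewrite /=; have := bef m (ltnSn m); rewrite /P /= -ltnNge => hm.
split; last by [].
case: m bef hP hm => [|m] //= _ hP hm; rewrite /P in hP; lia.
Qed.
Section G.
Variable R : realType.
Local Notation C := (R[i]).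
Definition fpq (k p q : nat) : R[i] :=
  (-1 + 2 * p%:R / k%:R) +i* (-1 + 2 * q%:R / k%:R).

Lemma csq_sub (a b c d : R) : csq ((a +i* b) - (c +i* d)) = (a - c) ^+ 2 + (b - d) ^+ 2.
Proof. by []. Qed.

Lemma nat_sq_ge1 (a b : nat) : a <> b -> 1 <= (a%:R - b%:R : R) ^+ 2.
Proof.
move=> ab; case: (ltngtP a b) => h.
- have : (a.+1)%:R <= b%:R :> R by rewrite ler_nat.
  rewrite -addn1 natrD => h2; nra.
- have : (b.+1)%:R <= a%:R :> R by rewrite ler_nat.
  rewrite -addn1 natrD => h2; nra.
- by case: ab.
Qed.

Lemma fpq_dist k p q p' q' : (1 <= k)%N -> (p, q) <> (p', q') ->
  4 / k%:R ^+ 2 <= csq (fpq k p q - fpq k p' q').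
Proof.
move=> k1 neq; rewrite /fpq csq_sub.
have kp : 0 < k%:R :> R by rewrite ltr0n.
have -> : (-1 + 2 * p%:R / k%:R - (-1 + 2 * p'%:R / k%:R)) ^+ 2 +
   (-1 + 2 * q%:R / k%:R - (-1 + 2 * q'%:R / k%:R)) ^+ 2 =
   4 / k%:R ^+ 2 * ((p%:R - p'%:R) ^+ 2 + (q%:R - q'%:R) ^+ 2) :> R.
  by field; rewrite gt_eqF.
rewrite -{1}(mulr1 (4 / _)); apply: ler_wpM2l.
  by apply: divr_ge0 => //; apply: exprn_ge0; apply: ltW.
have [e|pp] := eqVneq p p'; first subst p'.
  have qq : q <> q' by move=> e; apply: neq; rewrite e.
  have := (@nat_sq_ge1 q q' qq); rewrite subrr expr0n /= add0r; lra.
have pp' : p <> p' by apply/eqP.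
have := (@nat_sq_ge1 p p' pp') => h.
have := sqr_ge0 (q%:R - q'%:R : R); lra.
Qed.
Lemma csqM (x y : C) : csq (x * y) = csq x * csq y.
Proof. case: x => a b; case: y => c d /=; ring. Qed.
Lemma csq_ge0 (x : C) : 0 <= csq x.
Proof. case: x => a b /=; apply: addr_ge0; apply: sqr_ge0. Qed.
Lemma csq0 : csq (0 : C) = 0.
Proof. by rewrite /= expr2 mul0r addr0. Qed.
Lemma csq1 : csq (1 : C) = 1.
Proof. by rewrite /= !expr2 mul0r addr0 mulr1. Qed.

Lemma hdot_ee n (j : 'I_n) (x : 'cV[C]_n) : hdot (ee R j) x = x j 0.
Proof.
rewrite /hdot (bigD1 j) //= big1 ?addr0.
  by rewrite /ee mxE !eqxx /= oppr0 mul1r.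
by move=> i /negbTE ij; rewrite /ee mxE ij /= oppr0 mul0r.
Qed.

Lemma Dmul_entry n (j : 'I_n) (u : 'cV[C]_n) i :
  ((Dn R n - (zz R j)%:M) *m u) i 0 = (zz R i - zz R j) * u i 0.
Proof.
rewrite mxE (bigD1 i) //= big1 ?addr0.
  by rewrite !mxE !eqxx /= mulr1n.
by move=> k /negbTE ik; rewrite !mxE eq_sym ik /= mulr0n subr0 mul0r.
Qed.

Lemma Alv_entry n (j : 'I_n) (u : 'cV[C]_n) i :
  Alv (Dn R n) (zz R j) (ee R j) u i 0 = (zz R i - zz R j) * u i 0.
Proof.
rewrite /Alv /projperp hdot_ee Dmul_entry subrr mul0r mul0r scale0r subr0.
exact: Dmul_entry.
Qed.

Lemma Tperp_ee n (j : 'I_n) (u : 'cV[C]_n) : Tperp (ee R j) u <-> u j 0 = 0.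
Proof. by rewrite /Tperp /= hdot_ee. Qed.


Lemma csq_neq0 (x : C) : 0 < csq x -> x != 0.
Proof. by apply: contraTneq => ->; rewrite csq0 ltxx. Qed.

Lemma vnorm_ee n (i0 : 'I_n) (c : C) : vnorm (c *: ee R i0) = Num.sqrt (csq c).
Proof.
rewrite /vnorm (bigD1 i0) //= big1 ?addr0.
  by rewrite !mxE !eqxx /= mulr1.
by move=> i /negbTE ij; rewrite !mxE ij /= mulr0 csq0.
Qed.

Lemma generic n (j : 'I_n) (dl : R) (hdl : 0 < dl)
  (F1 : forall i, i != j -> dl <= csq (zz R i - zz R j))
  (F2 : exists2 i0, i0 != j & csq (zz R i0 - zz R j) = dl) :
  Alv_invertible (Dn R n) (zz R j) (ee R j) /\
  inv_opnorm (Dn R n) (zz R j) (ee R j) = (Num.sqrt dl^-1)%:E.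
Proof.
have dnz : forall i, i != j -> zz R i - zz R j != 0.
  by move=> i ij; apply: csq_neq0; apply: lt_le_trans (F1 i ij).
split.
  split.
    move=> u1 u2 /Tperp_ee h1 /Tperp_ee h2 e.
    apply/matrixP => i k; rewrite (ord1 k).
    have [->|ij] := eqVneq i j; first by rewrite h1 h2.
    have := congr1 (fun M : 'cV[C]_n => M i 0) e; rewrite /= !Alv_entry.
    by move/(mulfI (dnz i ij)).
  move=> w /Tperp_ee hw.
  exists (\col_i (w i 0 / (zz R i - zz R j))).
    by apply/Tperp_ee; rewrite mxE hw mul0r.
  apply/matrixP => i k; rewrite (ord1 k) Alv_entry mxE.
  have [->|ij] := eqVneq i j; first by rewrite hw subrr mul0r.
  by rewrite mulrC divfK // dnz.
apply/le_anti/andP; split.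
  apply: ge_ereal_sup => _ [u [/Tperp_ee hu [w [/Tperp_ee hw nw] e]] <-].
  rewrite lee_fin /vnorm ler_sqrt; last by rewrite invr_ge0 ltW.
  have sw : \sum_(i < n) csq (w i 0) = 1.
    rewrite -[LHS]sqr_sqrtr; last by apply: sumr_ge0 => i _; exact: csq_ge0.
    by move: nw; rewrite /vnorm => ->; rewrite expr1n.
  rewrite -[leRHS]mulr1 -sw mulr_sumr; apply: ler_sum => i _.
  have [->|ij] := eqVneq i j; first by rewrite hu hw csq0 mulr0.
  have := congr1 (fun M : 'cV[C]_n => M i 0) e; rewrite /= Alv_entry => <-.
  rewrite csqM mulrA -[leLHS]mul1r; apply: ler_wpM2r; first exact: csq_ge0.
  by rewrite -(mulVf (lt0r_neq0 hdl)) ler_wpM2l ?F1 // invr_ge0 ltW.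
case: F2 => i0 i0j hd.
apply: ereal_sup_ubound.
exists ((zz R i0 - zz R j)^-1 *: ee R i0); last first.
  congr (_%:E); rewrite vnorm_ee; congr Num.sqrt.
  have h : csq ((zz R i0 - zz R j)^-1) * dl = 1.
    by rewrite -hd -csqM mulVf ?csq1 // dnz.
  by rewrite -[csq _]mulr1 -(mulfV (lt0r_neq0 hdl)) mulrA h mul1r.
have ji0 : (j == i0) = false by rewrite eq_sym (negbTE i0j).
split.
  by apply/Tperp_ee; rewrite !mxE ji0 /= mulr0.
exists (ee R i0).
  split; first by apply/Tperp_ee; rewrite mxE ji0.
  by rewrite -[ee R i0]scale1r vnorm_ee csq1 sqrtr1.
apply/matrixP => i k; rewrite (ord1 k) Alv_entry !mxE.
have [->|ii0] := eqVneq i i0; first by rewrite eqxx /= mulr1 mulfV // dnz.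
by rewrite /= mulr0n !mulr0.
Qed.


Lemma nth_Sk_pq k p q : (p < k.+1)%N -> (q < k.+1)%N ->
  nth 0 (Sk R k) (p * k.+1 + q) = fpq k p q.
Proof.
move=> hp hq.
have := @nth_allpairs _ _ _ (fun p q : nat => ((-1 + 2 * p%:R / k%:R) +i* (-1 + 2 * q%:R / k%:R) : C))
  (iota 0 k.+1) (iota 0 k.+1) 0%N 0%N 0 p q.
rewrite size_iota !nth_iota // !add0n; by apply.
Qed.

Lemma nth_Sk k i : (i < k.+1 * k.+1)%N ->
  nth 0 (Sk R k) i = fpq k (i %/ k.+1) (i %% k.+1).
Proof.
move=> hi; rewrite {1}(divn_eq i k.+1) nth_Sk_pq //.
  by rewrite ltn_divLR.
by rewrite ltn_mod.
Qed.


Lemma coord_bd k p : (0 < k)%N -> (p <= k)%N ->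
  (-1 + 2 * p%:R / k%:R : R) ^+ 2 <= 1.
Proof.
move=> k0 pk; have kp : 0 < k%:R :> R by rewrite ltr0n.
have h1 : p%:R / k%:R <= 1 :> R by rewrite ler_pdivrMr // mul1r ler_nat.
have h0 : 0 <= p%:R / k%:R :> R by apply: divr_ge0; [apply: ler0n | apply: ltW].
rewrite -mulrA; nra.
Qed.

Lemma coord_lo k p : (0 < k)%N -> (4 * p <= k)%N ->
  1 / 4 <= (-1 + 2 * p%:R / k%:R : R) ^+ 2.
Proof.
move=> k0 pk; have kp : 0 < k%:R :> R by rewrite ltr0n.
have h4 : 4 * p%:R <= k%:R :> R by rewrite -(natrM R 4 p) ler_nat.
have h1 : p%:R / k%:R <= 1 / 4 :> R by rewrite ler_pdivrMr //; lra.
have h0 : 0 <= p%:R / k%:R :> R by apply: divr_ge0; [apply: ler0n | apply: ltW].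
rewrite -mulrA; nra.
Qed.

Lemma fpq_sq k p q p' q' : (0 < k)%N ->
  csq (fpq k p q - fpq k p' q') =
  4 / k%:R ^+ 2 * ((p%:R - p'%:R) ^+ 2 + (q%:R - q'%:R) ^+ 2).
Proof.
move=> k1; rewrite /fpq csq_sub.
have kp : 0 < k%:R :> R by rewrite ltr0n.
by field; rewrite gt_eqF.
Qed.

Lemma frob_D n : frob (Dn R n) = Num.sqrt (\sum_(i < n) csq (zz R i)).
Proof.
rewrite /frob; congr Num.sqrt; apply: eq_bigr => i _.
rewrite (bigD1 i) //= big1 ?addr0; first by rewrite mxE eqxx.
by move=> k /negbTE ik; rewrite mxE eq_sym ik csq0.
Qed.

Lemma zz_pq n (i : 'I_n) p q : (p < (kk n).+1)%N -> (q < (kk n).+1)%N ->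
  val i = (p * (kk n).+1 + q)%N -> zz R i = fpq (kk n) p q.
Proof. by move=> hp hq hi; rewrite /zz hi nth_Sk_pq. Qed.

Lemma main_n n (j : 'I_n) : (2 <= n)%N ->
  mu (Dn R n) (zz R j) (ee R j) =
  (Num.sqrt (\sum_(i < n) csq (zz R i)) * ((kk n)%:R / 2))%:E /\
  n%:R / 16 <= \sum_(i < n) csq (zz R i) /\ \sum_(i < n) csq (zz R i) <= 2 * n%:R.
Proof.
move=> n2; have [k1 [hn hk]] := @ceil_sqrt_spec n n2.
set k := kk n in k1 hn hk *.
set K := k.+1.
have KE : K = k.+1 by [].
have kp : 0 < k%:R :> R by rewrite ltr0n.
have zzE : forall i : 'I_n, zz R i = fpq k (i %/ K) (i %% K).
  move=> i; rewrite /zz nth_Sk //; exact: leq_trans (ltn_ord i) hn.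
have divK : forall i : 'I_n, (i %/ K < K)%N.
  by move=> i; rewrite ltn_divLR // (leq_trans (ltn_ord i) hn).
have modK : forall i : 'I_n, (i %% K < K)%N by move=> i; rewrite ltn_mod.
split.
  have F1 : forall i, i != j -> 4 / k%:R ^+ 2 <= csq (zz R i - zz R j).
    move=> i ij; rewrite !zzE; apply: fpq_dist => // -[e1 e2].
    by move/eqP: ij; apply; apply: val_inj; rewrite /= (divn_eq i K) (divn_eq j K) e1 e2.
  have F2 : exists2 i0, i0 != j & csq (zz R i0 - zz R j) = 4 / k%:R ^+ 2.
    have hj := zzE j.
    have ej := divn_eq j K.
    move: (divK j) (modK j) hj ej.
    case: (j %/ K)%N => [|p] hp; case: (j %% K)%N => [|q] hq hj ej.
    - have h1 : (1 < n)%N by [].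
      exists (Ordinal h1).
        by apply/eqP => /(congr1 val) /=; rewrite ej.
      rewrite (@zz_pq n (Ordinal h1) 0 1); [| lia | lia | rewrite /=; lia].
      rewrite hj fpq_sq // -[RHS]mulr1; congr (_ * _); rewrite -?natr1; ring.
    - have h1 : (0 * K + q < n)%N.
        by apply: leq_trans (ltn_ord j); rewrite ej; lia.
      exists (Ordinal h1).
        by apply/eqP => /(congr1 val) /=; rewrite ej; lia.
      rewrite (@zz_pq n (Ordinal h1) 0 q); [| lia | lia | rewrite /=; lia].
      rewrite hj fpq_sq // -[RHS]mulr1; congr (_ * _); rewrite -?natr1; ring.
    - have h1 : (p * K < n)%N.
        by apply: leq_trans (ltn_ord j); rewrite ej; lia.
      exists (Ordinal h1).
        by apply/eqP => /(congr1 val) /=; rewrite ej; lia.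
      rewrite (@zz_pq n (Ordinal h1) p 0); [| lia | lia | rewrite /=; lia].
      rewrite hj fpq_sq // -[RHS]mulr1; congr (_ * _); rewrite -?natr1; ring.
    - have h1 : (p.+1 * K + q < n)%N.
        by apply: leq_trans (ltn_ord j); rewrite ej; lia.
      exists (Ordinal h1).
        by apply/eqP => /(congr1 val) /=; rewrite ej; lia.
      rewrite (@zz_pq n (Ordinal h1) p.+1 q); [| lia | lia | rewrite /=; lia].
      rewrite hj fpq_sq // -[RHS]mulr1; congr (_ * _); rewrite -?natr1; ring.
  have hdl : 0 < 4 / k%:R ^+ 2 :> R by apply: divr_gt0 => //; apply: exprn_gt0.
  have [inv op] := @generic n j (4 / k%:R ^+ 2) hdl F1 F2.
  rewrite /mu asboolT // op frob_D -EFinM; congr (_%:E); congr (_ * _).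
  have -> : (4 / k%:R ^+ 2)^-1 = (k%:R / 2) ^+ 2 :> R.
    by field; rewrite gt_eqF.
  by rewrite sqrtr_sqr ger0_norm // divr_ge0 // ltW.
split; last first.
  apply: (@le_trans _ _ (\sum_(i < n) (2:R))); last first.
    by rewrite sumr_const card_ord mulr_natr.
  apply: ler_sum => i _.
  rewrite zzE /fpq /=.
  have := divK i; have := modK i; rewrite KE !ltnS => h1 h2.
  have := @coord_bd k _ k1 h1; have := @coord_bd k _ k1 h2; lra.
have eq : \sum_(i < n) csq (zz R i) = \sum_(0 <= i < n) csq (nth 0 (Sk R k) i).
  by rewrite big_mkord.
rewrite eq.
set m := (k %/ 4)%N.
have m4 : (4 * m <= k)%N by rewrite /m mulnC leq_divM.
have m4' : (k < 4 * m.+1)%N by rewrite /m mulnC -ltn_divLR.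
have hM : ((m.+1 * K) <= n)%N.
  case: (leqP k 1) => hk1.
    have m0 : m = 0%N by lia.
    rewrite m0 KE; lia.
  nia.
have hM4 : (n <= 4 * (m.+1 * K))%N by nia.
rewrite (big_cat_nat (leq0n (m.+1 * K)) hM) /=.
apply: (@le_trans _ _ (\sum_(0 <= i < m.+1 * K) csq (nth 0 (Sk R k) i))); last first.
  by rewrite lerDl; apply: sumr_ge0 => i _; exact: csq_ge0.
apply: (@le_trans _ _ (\sum_(0 <= i < m.+1 * K) (1 / 4 : R))); last first.
  apply: ler_sum_nat => i /andP [_ hi].
  rewrite nth_Sk; last by apply: (leq_trans hi); apply: (leq_trans hM).
  rewrite /fpq /=.
  have hp : (4 * (i %/ K) <= k)%N.
    apply: leq_trans m4; rewrite leq_mul2l /= -ltnS ltn_divLR //.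
  have := @coord_lo k _ k1 hp; have := sqr_ge0 (-1 + 2 * (i %% K)%:R / k%:R : R); lra.
rewrite sumr_const_nat subn0.
have : (n%:R <= 4 * (m.+1 * K)%:R :> R) by rewrite -(natrM R 4) ler_nat.
rewrite -mulr_natr; lra.
Qed.


End G.

Lemma sq_le (R : realType) (a b : R) : 0 <= a -> 0 <= b -> a ^+ 2 <= b ^+ 2 -> a <= b.
Proof. move=> ha hb h; nra. Qed.

Theorem lemma2p20 (R : realType) :
  exists c Cst : R, 0 < c /\ 0 < Cst /\
    forall n : nat, (2 <= n)%N -> forall j : 'I_n,
      ((c * n%:R)%:E <= mu (Dn R n) (zz R j) (ee R j) /\
       mu (Dn R n) (zz R j) (ee R j) <= (Cst * n%:R)%:E)%E.
Proof.
exists (1 / 16), 1; split; first lra; split; first lra.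
move=> n n2 j.
have [E [lo hi]] := @main_n R n j n2.
have [k1 [hn hk]] := @ceil_sqrt_spec n n2.
rewrite E !lee_fin.
set F := \sum_(i < n) _ in E lo hi *.
set k := kk n in k1 hn hk E *.
have kr1 : 1 <= k%:R :> R by rewrite ler1n.
have hkr : k%:R ^+ 2 <= n%:R :> R by rewrite expr2 -natrM ler_nat ltnW.
have hnr : n%:R <= (k%:R + 1) ^+ 2 :> R by rewrite natr1 expr2 -natrM ler_nat.
have F0 : 0 <= F by apply: sumr_ge0 => i _; exact: csq_ge0.
have sF := sqr_sqrtr F0.
have s0 : 0 <= Num.sqrt F := sqrtr_ge0 F.
have n0 : 0 <= n%:R :> R := ler0n R n.
have b2 : (Num.sqrt F * (k%:R / 2)) ^+ 2 = F * k%:R ^+ 2 / 4.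
  by rewrite exprMn sF; field.
have b0 : 0 <= Num.sqrt F * (k%:R / 2).
  by apply: mulr_ge0 => //; apply: divr_ge0 => //; apply: ler0n.
split.
  apply: sq_le; [by apply: mulr_ge0 => //; lra | exact: b0 | ].
  rewrite b2.
  have hk4 : n%:R / 4 <= k%:R ^+ 2 :> R by nra.
  have : n%:R / 16 * (n%:R / 4) <= F * k%:R ^+ 2.
    apply: ler_pM; [lra | lra | exact: lo | exact: hk4].
  nra.
apply: sq_le; [exact: b0 | by rewrite mul1r | ].
rewrite b2 mul1r.
have : F * k%:R ^+ 2 <= 2 * n%:R * n%:R.
  by apply: ler_pM; [exact: F0 | apply: exprn_ge0; apply: ler0n | exact: hi | exact: hkr].
nra.
Qed.
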